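(* Let $(X_{1,\infty},f_{1,\infty},\mu_{1,\infty})$ be a metric nonautonomous dynamical system and let $\mathcal{E}$ be an admissible class for $f_{1,\infty}$. Let $k\ge1$. Then $\mathcal{E}^{[k]}$ is an admissible class for $(X^{[k]}_{1,\infty},f^{[k]}_{1,\infty})$ and \[ h_{\mathcal{E}^{[k]}}\big(f^{[k]}_{1,\infty}\big)=k\cdot h_{\mathcal{E}}(f_{1,\infty}). \]
   Context: A metric NDS consists of probability spaces $(X_n,\mathcal{A}_n,\mu_n)$, $n\ge1$, and measurable maps $f_n:X_n\to X_{n+1}$ with $f_n\mu_n=\mu_{n+1}$ (push-forward). Notation: $f_k^0=\mathrm{id}$, $f_k^n=f_{k+n-1}\circ\cdots\circ f_k$, $f_k^{-n}$ = preimage under $f_k^n$. For finite measurable partitions, $H_\mu(\mathcal{P})=-\sum_{P}\mu(P)\log\mu(P)$, $\mathcal{P}\vee\mathcal{Q}=\{P\cap Q\}$. For a sequence $\mathcal{P}_{1,\infty}=\{\mathcal{P}_n\}$ of finite measurable partitions of $X_n$: $h(f_{1,\infty};\mathcal{P}_{1,\infty})=\limsup_{n}\frac1nH_{\mu_1}(\bigvee_{i=0}^{n-1}f_1^{-i}\mathcal{P}_{i+1})$, and $h_{\mathcal{E}}(f_{1,\infty})=\sup_{\mathcal{P}_{1,\infty}\in\mathcal{E}}h(f_{1,\infty};\mathcal{P}_{1,\infty})$. $\mathcal{P}_{1,\infty}\succeq\mathcal{Q}_{1,\infty}$ means $\mathcal{P}_n$ is finer than $\mathcal{Q}_n$ for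 all $n$. For $m\ge1$, $\mathcal{P}^{\langle m\rangle}_{1,\infty}(f_{1,\infty})$ is the sequence whose $k$-th term is $\bigvee_{i=0}^{m-1}f_k^{-i}\mathcal{P}_{k+i}$. A nonempty class $\mathcal{E}$ of sequences of finite measurable partitions for $X_{1,\infty}$ is admissible if: (A) for each $\mathcal{P}_{1,\infty}\in\mathcal{E}$ there is $N$ with $\#\mathcal{P}_n\le N$ for all $n$; (B) if $\mathcal{P}_{1,\infty}\in\mathcal{E}$ and $\mathcal{P}_{1,\infty}\succeq\mathcal{Q}_{1,\infty}$ then $\mathcal{Q}_{1,\infty}\in\mathcal{E}$; (C) if $\mathcal{P}_{1,\infty}\in\mathcal{E}$ then $\mathcal{P}^{\langle m\rangle}_{1,\infty}(f_{1,\infty})\in\mathcal{E}$ for every $m\ge1$. The $k$-th power system: $X^{[k]}_{1,\infty}=\{X_{(n-1)k+1}\}_{n\ge1}$, $f^{[k]}_{1,\infty}=\{f^k_{(n-1)k+1}\}_{n\ge1}$, with measures $\{\mu_{(n-1)k+1}\}$. $\mathcal{E}^{[k]}$ is the class of all sequences $\{\mathcal{P}_{(n-1)k+1}\}_{n\ge1}$ with $\{\mathcal{P}_n\}\in\mathcal{E}$. *)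

(* Defs.v *)
From HB Require Import structures.
From mathcomp Require Import all_boot all_order all_algebra.
From mathcomp Require Import all_classical all_reals all_analysis.
Unset Printing Implicit Defensive.
Import Order.TTheory GRing.Theory Num.Theory.
Local Open Scope classical_set_scope.
Local Open Scope ring_scope.

Section NDS.
Context {R : realType}.

Definition is_fpartition {d} {T : measurableType d} (P : set (set T)) : Prop :=
  [/\ finite_set P,
      (forall A, P A -> measurable A /\ A !=set0),
      (forall A B, P A -> P B -> A <> B -> A `&` B = set0) &
      bigcup P id = setT].

Definition finer {T : Type} (P Q : set (set T)) : Prop :=
  forall A, P A -> exists2 B, Q B & A `<=` B.

Definition pjoin {T : Type} (P Q : set (set T)) : set (set T) :=
  [set C | exists A B, [/\ P A, Q B, C = A `&` B & C !=set0]].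

Definition ppreim {T U : Type} (g : T -> U) (P : set (set U)) : set (set T) :=
  [set C | exists2 A, P A & C = g @^-1` A /\ C !=set0].

Definition pentropy {d} {T : measurableType d} (mu : probability T R)
  (P : set (set T)) : R :=
  (\sum_(A \in P) (- (fine (mu A) * ln (fine (mu A)))))%R.

(* Indices are 0-based: the paper's X_n is X (n-1) here. *)
Variable (dX : nat -> measure_display) (X : forall n, measurableType (dX n)).

Fixpoint fcomp (f : forall n, X n -> X n.+1) (k n : nat) : X k -> X (n + k) :=
  match n return X k -> X (n + k) with
  | 0 => id
  | n'.+1 => fun x => f (n' + k) (fcomp f k n' x)
  end.

Fixpoint pjoin_iter (f : forall n, X n -> X n.+1) (P : forall n, set (set (X n)))
  (k m : nat) : set (set (X k)) :=
  match m with
  | 0 => [set setT]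
  | m'.+1 => pjoin (pjoin_iter f P k m') (ppreim (fcomp f k m') (P (m' + k)))
  end.

Definition pseq_m (f : forall n, X n -> X n.+1) (P : forall n, set (set (X n)))
  (m : nat) : forall k, set (set (X k)) := fun k => pjoin_iter f P k m.

Definition seq_finer (P Q : forall n, set (set (X n))) : Prop :=
  forall n, finer (P n) (Q n).

Definition is_fpartition_seq (P : forall n, set (set (X n))) : Prop :=
  forall n, is_fpartition (P n).

Definition admissible (f : forall n, X n -> X n.+1)
  (E : set (forall n, set (set (X n)))) : Prop :=
  [/\ E !=set0,
      (forall P, E P -> is_fpartition_seq P),
      (forall P, E P -> exists N : nat, forall n, (P n #<= `I_N)%card),
      (forall P Q, E P -> is_fpartition_seq Q -> seq_finer P Q -> E Q) &
      (forall P m, E P -> (1 <= m)%N -> E (pseq_m f P m))].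

Definition hseq (mu0 : probability (X 0) R) (f : forall n, X n -> X n.+1)
  (P : forall n, set (set (X n))) : \bar R :=
  limn_esup (fun n => ((pentropy mu0 (pjoin_iter f P 0 n)) / n%:R)%:E).

Definition hclass (mu0 : probability (X 0) R) (f : forall n, X n -> X n.+1)
  (E : set (forall n, set (set (X n)))) : \bar R :=
  ereal_sup [set hseq mu0 f P | P in E].

End NDS.

Definition is_metric_NDS {R : realType} (dX : nat -> measure_display)
  (X : forall n, measurableType (dX n)) (mu : forall n, probability (X n) R)
  (f : forall n, X n -> X n.+1) : Prop :=
  forall n, measurable_fun setT (f n) /\
    (forall A, measurable A -> mu n.+1 A = mu n (f n @^-1` A)).

(* k-th power system: X^{[k]}_n = X_{nk} (0-based) *)
Definition powX (dX : nat -> measure_display) (k : nat) : nat -> measure_display :=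
  fun n => dX (n * k)%N.
Definition powXs (dX : nat -> measure_display) (X : forall n, measurableType (dX n))
  (k : nat) : forall n, measurableType (powX dX k n) := fun n => X (n * k)%N.
Definition powf (dX : nat -> measure_display) (X : forall n, measurableType (dX n))
  (f : forall n, X n -> X n.+1) (k : nat) :
  forall n, powXs dX X k n -> powXs dX X k n.+1 :=
  fun n => fcomp dX X f (n * k)%N k.
Definition powE (dX : nat -> measure_display) (X : forall n, measurableType (dX n))
  (k : nat) (E : set (forall n, set (set (X n)))) :
  set (forall n, set (set (powXs dX X k n))) :=
  [set Q | exists2 P, E P & Q = (fun n => P (n * k)%N)].

(* Main.v *)
Require Import Defs.
From HB Require Import structures.
From mathcomp Require Import all_boot all_order all_algebra.
From mathcomp Require Import all_classical all_reals all_analysis.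
From Stdlib Require Import Eqdep_dec.
From mathcomp Require Import ring lra.
Import Order.TTheory GRing.Theory Num.Theory.
Local Open Scope classical_set_scope.
Local Open Scope ring_scope.
Definition sameblock {T} (P : set (set T)) (y y' : T) :=
  forall A, P A -> (A y <-> A y').

Lemma finer_rel {T} (J1 J2 : set (set T)) (Rl : T -> T -> Prop) :
  (forall C, J1 C -> C !=set0) -> (forall x, exists2 D, J2 D & D x) ->
  (forall C x x', J1 C -> C x -> C x' -> Rl x x') ->
  (forall D x x', J2 D -> D x -> Rl x x' -> D x') -> finer J1 J2.
Proof.
move=> ne cov r1 r2 C J1C; have [x Cx] := ne C J1C.
have [D J2D Dx] := cov x; exists D => // x' Cx'.
exact: (r2 D x x' J2D Dx (r1 C x x' J1C Cx Cx')).
Qed.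

Section Dyn.
Variables (dX : nat -> measure_display) (X : forall n, measurableType (dX n)).
Variable f : forall n, X n -> X n.+1.

Definition XS := {n : nat & X n}.
Definition Fs (s : XS) : XS := existT (fun n => X n) (projT1 s).+1 (f _ (projT2 s)).

Lemma fcomp_iter a i (x : X a) :
  existT (fun n => X n) (i + a)%N (fcomp dX X f a i x) = iter i Fs (existT _ a x).
Proof. by elim: i => [|i IH] //=; rewrite -IH. Qed.

Lemma sb_transfer (P : forall n, set (set (X n))) a b (y y' : X a) (z z' : X b) :
  existT (fun n => X n) a y = existT _ b z ->
  existT (fun n => X n) a y' = existT _ b z' ->
  sameblock (P a) y y' -> sameblock (P b) z z'.
Proof.
move=> e1 e2; have hab : a = b by exact: (f_equal (@projT1 _ _) e1).
subst b.
have -> := inj_pair2_eq_dec _ (@eq_comparable nat) _ _ _ _ e1.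
by have -> := inj_pair2_eq_dec _ (@eq_comparable nat) _ _ _ _ e2.
Qed.

Definition relJ (P : forall n, set (set (X n))) a m (x x' : X a) :=
  forall i, (i < m)%N -> sameblock (P (i + a)%N) (fcomp dX X f a i x) (fcomp dX X f a i x').

Lemma join_rel1 (P : forall n, set (set (X n))) a m C x x' :
  (forall n A B, P n A -> P n B -> A <> B -> A `&` B = set0) ->
  pjoin_iter dX X f P a m C -> C x -> C x' -> relJ P a m x x'.
Proof.
move=> dis; elim: m C => [|m IH] C /=.
  by move=> _ _ _ i.
move=> [C0 [B [J0 [A PA [-> _]] -> _]]] [C0x Bx] [C0x' Bx'] i.
rewrite ltnS leq_eqVlt => /orP[/eqP ->|im]; last exact: (IH C0 J0 C0x C0x' i im).
move=> A' PA'; have [<-|neq] := pselect (A = A'); first by split.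
split=> H.
  have : (A `&` A') (fcomp dX X f a m x) by [].
  by rewrite (dis _ _ _ PA PA' neq).
have : (A `&` A') (fcomp dX X f a m x') by [].
by rewrite (dis _ _ _ PA PA' neq).
Qed.

Arguments join_rel1 {P a m C x x'}.

Lemma join_rel2 (P : forall n, set (set (X n))) a m C x x' :
  pjoin_iter dX X f P a m C -> C x -> relJ P a m x x' -> C x'.
Proof.
elim: m C => [|m IH] C /=.
  by move=> -> _ _.
move=> [C0 [B [J0 [A PA [-> _]] -> _]]] [C0x Bx] r; split.
  by apply: (IH C0 J0 C0x) => i im; apply: r; rewrite ltnS ltnW.
have := r m (ltnSn m) A PA; rewrite /preimage /=; by move=> [+ _]; apply.
Qed.

Arguments join_rel2 {P a m C x x'}.

Lemma join_cover (P : forall n, set (set (X n))) a m :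
  (forall n, bigcup (P n) id = setT) ->
  forall x, exists2 C, pjoin_iter dX X f P a m C & C x.
Proof.
move=> cov x; elim: m => [|m [C0 J0 C0x]] /=; first by exists setT.
have : bigcup (P (m + a)%N) id (fcomp dX X f a m x) by rewrite cov.
move=> [A PA Ax].
exists (C0 `&` fcomp dX X f a m @^-1` A) => //.
exists C0, (fcomp dX X f a m @^-1` A); split => //.
- by exists A => //; split => //; exists x.
- by exists x.
Qed.

Lemma join_ne (P : forall n, set (set (X n))) a m C :
  [set: X a] !=set0 -> pjoin_iter dX X f P a m C -> C !=set0.
Proof.
move=> ne; case: m => [|m] /=; first by move=> ->.
by move=> [? [? [_ _ _ ?]]].
Qed.

Lemma fcomp_meas a i : (forall n, measurable_fun setT (f n)) ->
  measurable_fun setT (fcomp dX X f a i).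
Proof.
move=> mf; elim: i => [|i IH] /=; first exact: measurable_id.
exact: (measurableT_comp (mf (i + a)%N) IH).
Qed.

Lemma join_meas (P : forall n, set (set (X n))) a m C :
  (forall n, measurable_fun setT (f n)) -> (forall n A, P n A -> measurable A) ->
  pjoin_iter dX X f P a m C -> measurable C.
Proof.
move=> mf mP; elim: m C => [|m IH] C /=; first by move=> ->.
move=> [C0 [B [J0 [A PA [-> _]] -> _]]].
apply: measurableI; first exact: IH.
have := fcomp_meas a m mf measurableT _ (mP _ _ PA); by rewrite setTI.
Qed.

Arguments join_meas {P a m C}.

Lemma join_finite (P : forall n, set (set (X n))) a m :
  (forall n, finite_set (P n)) -> finite_set (pjoin_iter dX X f P a m).
Proof.
move=> fP; elim: m => [|m IH] /=; first exact: finite_set1.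
apply: (@sub_finite_set _ _ ((fun p => p.1 `&` p.2) @`
  (pjoin_iter dX X f P a m `*` [set preimage (fcomp dX X f a m) A | A in P (m + a)%N]))).
  move=> C [A [B [JA [A' PA' [-> _]] -> _]]].
  by exists (A, fcomp dX X f a m @^-1` A') => //; split => //; exists A'.
by apply: finite_image; apply: finite_setX => //; apply: finite_image.
Qed.

Arguments join_ne {P a m C}.

Lemma join_fpart (P : forall n, set (set (X n))) a m :
  (forall n, measurable_fun setT (f n)) -> (forall n, is_fpartition (P n)) ->
  [set: X a] !=set0 -> is_fpartition (pjoin_iter dX X f P a m).
Proof.
move=> mf fP ne; split.
- by apply: join_finite => n; have [] := fP n.
- move=> A JA; split; last exact: join_ne JA.
  by apply: (join_meas mf _ JA) => n B PB; have [_ /(_ B PB) [] ] := fP n.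
- move=> A B JA JB AB; apply/seteqP; split => // y [Ay By]; exfalso; apply: AB.
  have dis : forall n A B, P n A -> P n B -> A <> B -> A `&` B = set0.
    by move=> n; have [] := fP n.
  apply/seteqP; split => z Hz.
    exact: (join_rel2 JB By (join_rel1 dis JA Ay Hz)).
  exact: (join_rel2 JA Ay (join_rel1 dis JB By Hz)).
- apply/seteqP; split => // x _.
  have [C JC Cx] := @join_cover P a m (fun n => let: And4 _ _ _ h := fP n in h) x.
  by exists C.
Qed.

End Dyn.
Arguments join_rel1 {dX X f P a m C x x'}.
Arguments join_rel2 {dX X f P a m C x x'}.
Arguments join_meas {dX X f P a m C}.
Arguments join_ne {dX X f P a m C}.

Section Pow.
Variables (dX : nat -> measure_display) (X : forall n, measurableType (dX n)).
Variable f : forall n, X n -> X n.+1.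
Variable k : nat.

Lemma powf_iter n i (x : X (n*k)%N) :
  existT (fun m => X m) ((i+n)*k)%N (fcomp (powX dX k) (powXs dX X k) (powf dX X f k) n i x)
  = iter (i*k) (Fs dX X f) (existT _ (n*k)%N x).
Proof.
elim: i => [|i IH] //.
rewrite mulSn iterD -IH -fcomp_iter; reflexivity.
Qed.

Lemma rel_pow_small (P : forall n, set (set (X n))) n m M (x x' : X (n*k)%N) :
  (forall i, (i < m)%N -> (i*k < M)%N) ->
  relJ dX X f P (n*k) M x x' ->
  relJ (powX dX k) (powXs dX X k) (powf dX X f k) (fun j => P (j*k)%N) n m x x'.
Proof.
move=> hM r i im.
have e1 : existT (fun m => X m) (i*k + n*k)%N (fcomp dX X f (n*k) (i*k) x) =
  existT (fun m => X m) ((i+n)*k)%N (fcomp (powX dX k) (powXs dX X k) (powf dX X f k) n i x).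
  by rewrite fcomp_iter powf_iter.
have e2 : existT (fun m => X m) (i*k + n*k)%N (fcomp dX X f (n*k) (i*k) x') =
  existT (fun m => X m) ((i+n)*k)%N (fcomp (powX dX k) (powXs dX X k) (powf dX X f k) n i x').
  by rewrite fcomp_iter powf_iter.
exact: (sb_transfer dX X P _ _ _ _ _ _ e1 e2 (r _ (hM i im))).
Qed.

Lemma rel_pow_big (P : forall n, set (set (X n))) b n (x x' : X (b*k)%N) :
  (0 < k)%N -> (forall n, is_fpartition (P n)) ->
  relJ (powX dX k) (powXs dX X k) (powf dX X f k)
    (fun j => pjoin_iter dX X f P (j*k)%N k) b n x x' ->
  relJ dX X f P (b*k) (n*k) x x'.
Proof.
move=> k0 fP r j jn.
have dis : forall n A B, P n A -> P n B -> A <> B -> A `&` B = set0.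
  by move=> n'; have [] := fP n'.
have cov : forall n, bigcup (P n) id = setT.
  by move=> n'; have [] := fP n'.
set i := (j %/ k)%N; set l := (j %% k)%N.
have ij : (i < n)%N by rewrite /i ltn_divLR.
have lk : (l < k)%N by rewrite /l ltn_mod.
have sb := r i ij.
set y := fcomp (powX dX k) (powXs dX X k) (powf dX X f k) b i x in sb.
set y' := fcomp (powX dX k) (powXs dX X k) (powf dX X f k) b i x' in sb.
have [C JC Cy] := join_cover dX X f P ((i + b) * k)%N k cov y.
have Cy' : C y' by apply/(sb C JC).
have := join_rel1 dis JC Cy Cy' l lk.
apply: sb_transfer.
  rewrite fcomp_iter fcomp_iter /y powf_iter -iterD.
  by rewrite (divn_eq j k) addnC.
rewrite fcomp_iter fcomp_iter /y' powf_iter -iterD.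
by rewrite (divn_eq j k) addnC.
Qed.

End Pow.
Section Ent.
Context {R : realType} {d : measure_display} {T : measurableType d} (mu : probability T R).

Definition phi (x : R) := - (x * ln x).

Lemma phi_add (a b : R) : 0 <= a -> 0 <= b -> phi (a + b) <= phi a + phi b.
Proof.
move=> a0 b0; rewrite /phi.
have [->|a0'] := eqVneq a 0; first by rewrite add0r mul0r oppr0 add0r.
have [->|b0'] := eqVneq b 0; first by rewrite addr0 mul0r oppr0 addr0.
have ap : 0 < a by rewrite lt0r a0' a0.
have bp : 0 < b by rewrite lt0r b0' b0.
rewrite mulrDl opprD lerD // lerN2; apply: ler_wpM2l => //;
  rewrite ler_ln ?posrE ?addr_gt0 //.
  by rewrite lerDl.
by rewrite lerDr.
Qed.

Lemma phi_sum (I : Type) (s : seq I) (F : I -> R) : (forall i, 0 <= F i) ->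
  phi (\sum_(i <- s) F i) <= \sum_(i <- s) phi (F i).
Proof.
move=> F0; elim: s => [|i s IH]; first by rewrite !big_nil /phi mul0r oppr0.
rewrite !big_cons; apply: (le_trans (phi_add _ _ (F0 i) (sumr_ge0 _ (fun j _ => F0 j)))).
by rewrite lerD2l.
Qed.

Lemma phi_fsum (I : choiceType) (D : set I) (F : I -> R) : finite_set D ->
  (forall i, 0 <= F i) ->
  phi (\sum_(i \in D) F i) <= \sum_(i \in D) phi (F i).
Proof. by move=> fD F0; rewrite !fsbig_finite //; apply: phi_sum. Qed.

Lemma ler_fsum (I : choiceType) (D : set I) (F G : I -> R) : finite_set D ->
  (forall i, D i -> F i <= G i) -> \sum_(i \in D) F i <= \sum_(i \in D) G i.
Proof.
move=> fD FG; rewrite !fsbig_finite // big_seq [X in _ <= X]big_seq.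
apply: ler_sum => i; rewrite in_fset_set // inE; apply: FG.
Qed.

Lemma pentropy_le (P Q : set (set T)) : is_fpartition P -> is_fpartition Q ->
  finer P Q -> pentropy mu Q <= pentropy mu P.
Proof.
move=> [fP mP dP cP] [fQ mQ dQ cQ] fin.
pose m A := fine (mu A).
have m0 : forall A, 0 <= m A by move=> A; rewrite /m fine_ge0.
have muE : forall A, measurable A -> mu A = (m A)%:E.
  by move=> A mA; rewrite /m fineK // fin_num_measure.
pose PB B := P `&` [set A | A `<=` B].
have step1 : forall B, Q B -> m B = \sum_(A \in PB B) m A.
  move=> B QB.
  have BE : B = \bigcup_(A in PB B) A.
    apply/seteqP; split; last by move=> x [A [_ AB] Ax]; apply: AB.
    move=> x Bx; have : bigcup P id x by rewrite cP.
    move=> [A PA Ax]; exists A => //; split => //.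
    have [B' QB' AB'] := fin A PA.
    have [<-//|nBB] := pselect (B' = B).
    have : (B' `&` B) x by split => //; apply: AB'.
    by rewrite dQ.
  have fPB : finite_set (PB B) by apply: sub_finite_set fP => A [].
  have triv : trivIset (PB B) id.
    move=> A A' [PA _] [PA' _] [x [Ax A'x]].
    have [//|nAA] := pselect (A = A').
    have : (A `&` A') x by [].
    by rewrite dP.
  have mPB : forall A, PB B A -> measurable (id A) by move=> A [/mP []].
  have := @measure_fin_bigcup _ _ _ mu _ (PB B) id fPB triv mPB.
  rewrite -BE /m => ->.
  rewrite (eq_fsbigr (fun A => (m A)%:E)); last first.
    by move=> A; rewrite inE => /mPB /muE.
  by rewrite fsumEFin.
rewrite /pentropy.
change (\sum_(B \in Q) phi (m B) <= \sum_(A \in P) phi (m A)).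
apply: (@le_trans _ _ (\sum_(B \in Q) \sum_(A \in PB B) phi (m A))).
  apply: ler_fsum => // B QB; rewrite step1 //; apply: phi_fsum => //.
  by apply: sub_finite_set fP => A [].
rewrite le_eqVlt; apply/orP; left; apply/eqP.
under eq_fsbigr => B QB do rewrite fsbig_mkcondr.
rewrite exchange_fsbig //; apply: eq_fsbigr => A; rewrite inE => PA.
have [B0 QB0 AB0] := fin A PA.
rewrite (fsbigD1 B0) // ifT; last by apply/mem_set.
rewrite fsbig1 /=; first by rewrite addr0.
move=> B [QB nB]; rewrite ifN //.
apply/negP; rewrite inE => AB; apply: nB.
have [x Ax] := (mP A PA).2.
have [//|nBB] := pselect (B = B0).
have : (B `&` B0) x by split; [apply: AB|apply: AB0].
by rewrite dQ.
Qed.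

Lemma pentropy_ge0 (P : set (set T)) : is_fpartition P -> 0 <= pentropy mu P.
Proof.
move=> [fP mP _ _]; apply: fsumr_ge0 => A PA.
have mA := (mP A PA).1.
have h1 : fine (mu A) <= 1.
  have := probability_le1 mu mA.
  by rewrite -(fineK (fin_num_measure mu _ mA)) lee_fin.
rewrite oppr_ge0; apply: mulr_ge0_le0; first by rewrite fine_ge0.
exact: ln_le0.
Qed.

End Ent.
Section LS.
Context {R : realType}.
Local Open Scope ereal_scope.

Lemma limn_esup_le_comp (u v : (\bar R)^nat) (g : nat -> nat) :
  (forall N, exists M, forall n, (M <= n)%N -> (N <= g n)%N) ->
  (exists M, forall n, (M <= n)%N -> u n <= v (g n)) ->
  limn_esup u <= limn_esup v.
Proof.
move=> gi [M uv]; rewrite /limn_esup /limf_esup.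
apply: le_ereal_inf_tmp => x [V HV' xE]; rewrite -xE.
have [N _ HV] : exists2 N : nat, setT N & [set n | (N <= n)%N] `<=` V := HV'.
have [M' HM'] := gi N.
apply: ge_ereal_inf; exists (ereal_sup (u @` [set n | (maxn M M' <= n)%N])).
  by exists [set n | (maxn M M' <= n)%N] => //; exists (maxn M M').
apply: ge_ereal_sup => _ [n /= Hn <-].
rewrite geq_max in Hn; case/andP: Hn => Mn M'n.
apply: le_trans (uv n Mn) _; apply: ereal_sup_ubound; exists (g n) => //.
by apply: HV; apply: HM'.
Qed.

Lemma limn_esupZ (u : (\bar R)^nat) (r : R) : (0 < r)%R ->
  limn_esup (fun n => r%:E * u n) = r%:E * limn_esup u.
Proof.
move=> r0; rewrite /limn_esup /limf_esup -ereal_inf_pZl //; congr ereal_inf.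
apply/seteqP; split => x.
  move=> [V HV <-]; exists (ereal_sup (u @` V)); first by exists V.
  by rewrite -ereal_sup_pZl // image_comp.
move=> [y [V HV <-] <-]; exists V => //.
by rewrite -ereal_sup_pZl // image_comp.
Qed.

Lemma limn_esup_eps (u v : R^nat) (g : nat -> nat) :
  (forall n, 0 <= v n)%R ->
  (forall N, exists M, forall n, (M <= n)%N -> (N <= g n)%N) ->
  (forall e : R, (0 < e)%R -> exists M, forall n, (M <= n)%N -> (u n <= (1 + e) * v (g n))%R) ->
  limn_esup (fun n => (u n)%:E) <= limn_esup (fun n => (v n)%:E).
Proof.
move=> v0 gi H.
have key : forall e : R, (0 < e)%R ->
    limn_esup (fun n => (u n)%:E) <= (1 + e)%:E * limn_esup (fun n => (v n)%:E).
  move=> e e0; rewrite -limn_esupZ ?addr_gt0 //.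
  apply: (limn_esup_le_comp _ _ _ gi); have [M HM] := H e e0; exists M => n Mn.
  by rewrite -EFinM lee_fin; apply: HM.
have L0 : 0 <= limn_esup (fun n => (v n)%:E).
  apply: limf_esup_ge0 => [HN|n]; last by rewrite lee_fin.
  have [N _ HN'] : exists2 N : nat, setT N & [set n | (N <= n)%N] `<=` set0 := HN.
  exact: (HN' N (leqnn N)).
move: L0 key; case: (limn_esup (fun n => (v n)%:E)) => [l||] //= l0 key.
  apply/lee_addgt0Pr => e e0.
  have l1 : (0 < l + 1)%R by rewrite ltr_wpDl.
  apply: (le_trans (key (e / (l + 1))%R (divr_gt0 e0 l1))).
  rewrite -EFinM -EFinD lee_fin mulrDl mul1r lerD2l.
  by rewrite mulrAC ler_pdivrMr // ler_pM2l // lerDl ler01.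
exact: leey.
Qed.

End LS.
Definition castS (dX : nat -> measure_display) (X : forall n, measurableType (dX n)) a b
  (S : set (set (X a))) : set (set (X b)) :=
  match eq_comparable a b with
  | left e => eq_rect a (fun c => set (set (X c))) S b e
  | right _ => set0 end.

Lemma castS_id (dX : nat -> measure_display) (X : forall n, measurableType (dX n)) a (S : set (set (X a))) : castS dX X a a S = S.
Proof.
rewrite /castS; case: (eq_comparable a a) => // e.
by rewrite (eq_irrelevance e erefl).
Qed.

Lemma castS_fpart (dX : nat -> measure_display) (X : forall n, measurableType (dX n)) a b (S : set (set (X a))) : a = b ->
  is_fpartition S -> is_fpartition (castS dX X a b S).
Proof. by move=> e; subst b; rewrite castS_id. Qed.

Lemma castS_finer (dX : nat -> measure_display) (X : forall n, measurableType (dX n)) (P : forall n, set (set (X n))) a b (S : set (set (X a))) : a = b ->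
  finer (P a) S -> finer (P b) (castS dX X a b S).
Proof. by move=> e; subst b; rewrite castS_id. Qed.

Lemma finer_refl {T} (P : set (set T)) : finer P P.
Proof. by move=> A PA; exists A. Qed.

Section PowAdm.
Variables (dX : nat -> measure_display) (X : forall n, measurableType (dX n)).
Variable f : forall n, X n -> X n.+1.
Variable k : nat.
Hypothesis mf : forall n, measurable_fun setT (f n).
Hypothesis ne : forall n, [set: X n] !=set0.
Hypothesis k0 : (0 < k)%N.

Lemma powf_meas n : measurable_fun setT (powf dX X f k n).
Proof. exact (fcomp_meas dX X f (n*k) k mf). Qed.

Lemma finer_small (P : forall n, set (set (X n))) b m :
  (forall n, is_fpartition (P n)) ->
  finer (pjoin_iter dX X f P (b*k) (m*k))
    (pjoin_iter (powX dX k) (powXs dX X k) (powf dX X f k) (fun j => P (j*k)%N) b m).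
Proof.
move=> fP.
have dis : forall n A B, P n A -> P n B -> A <> B -> A `&` B = set0.
  by move=> n; have [] := fP n.
apply: (@finer_rel _ _ _ (relJ (powX dX k) (powXs dX X k) (powf dX X f k) (fun j => P (j*k)%N) b m)).
- by move=> C JC; exact: (join_ne (ne (b*k)) JC).
- by apply: join_cover => n; case: (fP (n*k)%N).
- move=> C x x' JC Cx Cx'; apply: (rel_pow_small dX X f k P b m (m*k)).
    by move=> i im; rewrite ltn_pmul2r.
  exact: (join_rel1 dis JC Cx Cx').
- by move=> D x x' JD Dx r; exact: (join_rel2 JD Dx r).
Qed.

Lemma finer_big (P : forall n, set (set (X n))) b n :
  (forall n, is_fpartition (P n)) ->
  finer (pjoin_iter (powX dX k) (powXs dX X k) (powf dX X f k)
          (fun j => pjoin_iter dX X f P (j*k)%N k) b n)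
    (pjoin_iter dX X f P (b*k) (n*k)).
Proof.
move=> fP.
have disQ : forall n A B, pjoin_iter dX X f P (n*k)%N k A ->
    pjoin_iter dX X f P (n*k)%N k B -> A <> B -> A `&` B = set0.
  by move=> n'; have [] := join_fpart dX X f P (n'*k)%N k mf fP (ne _).
apply: (@finer_rel _ _ _ (relJ dX X f P (b*k) (n*k))).
- by move=> C JC; exact: (join_ne (ne (b*k)) JC).
- by apply: join_cover => n'; case: (fP n').
- move=> C x x' JC Cx Cx'; apply: (rel_pow_big dX X f k P b n x x' k0 fP).
  exact: (join_rel1 disQ JC Cx Cx').
- by move=> D x x' JD Dx r; exact: (join_rel2 JD Dx r).
Qed.

Lemma finer_mono (P : forall n, set (set (X n))) a n n' :
  (forall n, is_fpartition (P n)) -> (n <= n')%N ->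
  finer (pjoin_iter dX X f P a n') (pjoin_iter dX X f P a n).
Proof.
move=> fP nn'.
have dis : forall n A B, P n A -> P n B -> A <> B -> A `&` B = set0.
  by move=> m; have [] := fP m.
apply: (@finer_rel _ _ _ (relJ dX X f P a n)).
- by move=> C JC; exact: (join_ne (ne a) JC).
- by apply: join_cover => m; case: (fP m).
- move=> C x x' JC Cx Cx' i ilt.
  exact: (join_rel1 dis JC Cx Cx' i (leq_trans ilt nn')).
- by move=> D x x' JD Dx r; exact: (join_rel2 JD Dx r).
Qed.

Lemma powE_adm E : admissible dX X f E ->
  admissible (powX dX k) (powXs dX X k) (powf dX X f k) (powE dX X k E).
Proof.
move=> [[P0 HP0] partE bndE coarseE joinE]; split.
- by exists (fun n => P0 (n*k)%N); exists P0.
- by move=> Q [P HP ->] n; exact: (partE P HP (n*k)%N).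
- move=> Q [P HP ->]; have [N HN] := bndE P HP; exists N => n; exact: HN.
- move=> Q Q' [P HP ->] partQ' finQ'.
  pose P' j := if dvdn k j then castS dX X (j %/ k * k)%N j (Q' (j %/ k)%N) else P j.
  exists P'.
    apply: (coarseE P P' HP).
      move=> j; rewrite /P'; case: ifP => kj; last exact: partE.
      by apply: castS_fpart; [rewrite divnK|exact: partQ'].
    move=> j; rewrite /P'; case: ifP => kj; last exact: finer_refl.
    apply: (castS_finer dX X P); first by rewrite divnK.
    exact: finQ'.
  apply: functional_extensionality_dep => n; rewrite /P' dvdn_mull // mulnK //.
  by rewrite castS_id.
- move=> Q m [P HP ->] m1.
  have mk0 : (0 < m * k)%N by rewrite muln_gt0 m1 k0.
  have HS := joinE P (m * k)%N HP mk0.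
  set S := pseq_m dX X f P (m * k) in HS.
  pose Qp := pjoin_iter (powX dX k) (powXs dX X k) (powf dX X f k) (fun j => P (j*k)%N).
  pose P' j := if dvdn k j then castS dX X (j %/ k * k)%N j (Qp (j %/ k)%N m) else S j.
  exists P'.
    apply: (coarseE S P' HS).
      move=> j; rewrite /P'; case: ifP => kj; last exact: partE.
      apply: castS_fpart; first by rewrite divnK.
      apply: join_fpart.
      + exact: powf_meas.
      + by move=> n; exact: (partE P HP (n*k)%N).
      + exact: ne.
    move=> j; rewrite /P'; case: ifP => kj; last exact: finer_refl.
    apply: (castS_finer dX X S); first by rewrite divnK.
    exact: (finer_small P (j %/ k)%N m (partE P HP)).
  apply: functional_extensionality_dep => n; rewrite /P' dvdn_mull // mulnK //.
  by rewrite castS_id.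
Qed.

End PowAdm.
Section Final.
Context {R : realType}.
Variables (dX : nat -> measure_display) (X : forall n, measurableType (dX n)).
Variable (mu0 : probability (X 0%N) R).
Variable f : forall n, X n -> X n.+1.
Variable k : nat.
Hypothesis mf : forall n, measurable_fun setT (f n).
Hypothesis ne : forall n, [set: X n] !=set0.
Hypothesis k0 : (0 < k)%N.

Let a P n := pentropy mu0 (pjoin_iter dX X f P 0 n).

Lemma a_ge0 P n : (forall n, is_fpartition (P n)) -> 0 <= a P n.
Proof. by move=> fP; apply: pentropy_ge0; apply: join_fpart. Qed.

Lemma a_mono P n n' : (forall n, is_fpartition (P n)) -> (n <= n')%N -> a P n <= a P n'.
Proof.
move=> fP nn'; apply: pentropy_le; try exact: join_fpart.
exact: finer_mono.
Qed.

Lemma kdiv (x : R) n : (k%:R * (x / (n * k)%:R) = x / n%:R)%R.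
Proof.
have kn0 : (k%:R != 0 :> R)%R by rewrite pnatr_eq0 -lt0n.
by rewrite natrM invfM mulrCA mulrA [_^-1 / _]mulrC mulrA mulfK.
Qed.

Lemma hseq_le P : (forall n, is_fpartition (P n)) ->
  (hseq (powX dX k) (powXs dX X k) mu0 (powf dX X f k) (fun n => P (n * k)%N)
   <= (k%:R)%:E * hseq dX X mu0 f P)%E.
Proof.
move=> fP; rewrite /hseq.
have ble : forall n, (pentropy mu0 (pjoin_iter (powX dX k) (powXs dX X k) (powf dX X f k)
      (fun n => P (n * k)%N) 0 n) <= a P (n * k))%R.
  move=> n; apply: pentropy_le.
  - exact: join_fpart.
  - exact: (join_fpart (powX dX k) (powXs dX X k) (powf dX X f k) (fun n => P (n*k)%N) 0 n
      (powf_meas dX X f k mf) (fun j => fP (j*k)%N) (ne 0)).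
  - exact (finer_small dX X f k ne k0 P 0 n fP).
apply: (@le_trans _ _ (limn_esup (fun n => (a P (n * k) / n%:R)%:E))).
  apply: (limn_esup_le_comp _ _ id); first by move=> N; exists N.
  by exists 0%N => n _; rewrite lee_fin ler_wpM2r // invr_ge0.
rewrite (_ : (fun n => (a P (n * k) / n%:R)%:E) =
   fun n => ((k%:R)%:E * (a P (n * k) / (n * k)%:R)%:E)%E); last first.
  by apply: funext => n; rewrite -EFinM kdiv.
rewrite limn_esupZ ?ltr0n //; apply: lee_wpmul2l; first by rewrite lee_fin ler0n.
apply: (limn_esup_le_comp _ _ (fun n => n * k)%N).
  by move=> N; exists N => n Nn; apply: leq_trans Nn (leq_pmulr n k0).
by exists 0%N.
Qed.

Lemma hseq_ge P : (forall n, is_fpartition (P n)) ->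
  ((k%:R)%:E * hseq dX X mu0 f P <=
   hseq (powX dX k) (powXs dX X k) mu0 (powf dX X f k) (fun n => pseq_m dX X f P k (n * k)%N))%E.
Proof.
move=> fP; rewrite /hseq.
have aPk : forall n, (a P (n * k) <= pentropy mu0 (pjoin_iter (powX dX k) (powXs dX X k)
    (powf dX X f k) (fun n => pseq_m dX X f P k (n * k)%N) 0 n))%R.
  move=> n; apply: pentropy_le.
  - exact: (join_fpart (powX dX k) (powXs dX X k) (powf dX X f k)
      (fun n => pseq_m dX X f P k (n * k)%N) 0 n
      (powf_meas dX X f k mf) (fun j => join_fpart dX X f P (j*k)%N k mf fP (ne _)) (ne 0)).
  - exact: join_fpart.
  - exact (finer_big dX X f k mf ne k0 P 0 n fP).
apply: (@le_trans _ _ (limn_esup (fun n => (a P (n * k) / n%:R)%:E))); last first.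
  apply: (limn_esup_le_comp _ _ id); first by move=> N; exists N.
  by exists 0%N => n _; rewrite lee_fin ler_wpM2r // invr_ge0.
rewrite (_ : (fun n => (a P (n * k) / n%:R)%:E) =
   fun n => ((k%:R)%:E * (a P (n * k) / (n * k)%:R)%:E)%E); last first.
  by apply: funext => n; rewrite -EFinM kdiv.
rewrite limn_esupZ ?ltr0n //; apply: lee_wpmul2l; first by rewrite lee_fin ler0n.
apply: (limn_esup_eps (fun m => a P m / m%:R)%R (fun n => a P (n * k) / (n * k)%:R)%R
   (fun m => (m + k.-1) %/ k)%N).
- by move=> n; apply: divr_ge0; [exact: a_ge0|exact: ler0n].
- move=> N; exists (N * k)%N => m Nm.
  by rewrite -(mulnK N k0) leq_div2r // (leq_trans Nm) // leq_addr.
- move=> e e0; exists (Num.Def.truncn (k%:R / e)).+1 => m Hm /=.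
  set G := ((m + k.-1) %/ k * k)%N.
  have mG : (m <= G)%N.
    have heq := divn_eq (m + k.-1) k.
    have hr : ((m + k.-1) %% k < k)%N by rewrite ltn_mod.
    rewrite -(leq_add2r k.-1) {1}heq leq_add2l -ltnS prednK //.
  have Gm : (G <= m + k)%N.
    apply: (leq_trans (leq_divM _ _)); rewrite leq_add2l; exact: leq_pred.
  have m0 : (0 < m)%N by apply: leq_trans Hm.
  have G0 : (0 < G)%N := leq_trans m0 mG.
  have hmono := a_mono P m G fP mG.
  have ha := a_ge0 P G fP.
  have hke : (k%:R < m%:R * e)%R.
    rewrite -ltr_pdivrMr //; apply: (lt_le_trans (truncnS_gt _)).
    by rewrite ler_nat.
  have m0R : (0 < m%:R :> R)%R by rewrite ltr0n.
  have G0R : (0 < G%:R :> R)%R by rewrite ltr0n.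
  have c1 : (1 <= (1 + e) * m%:R / G%:R)%R.
    rewrite ler_pdivlMr // mul1r.
    apply: (le_trans (_ : G%:R <= (m + k)%:R)%R); first by rewrite ler_nat.
    by rewrite natrD mulrDl mul1r lerD2l mulrC ltW.
  rewrite ler_pdivrMr //.
  have -> : ((1 + e) * (a P G / G%:R) * m%:R = a P G * ((1 + e) * m%:R / G%:R))%R.
    by field; rewrite pnatr_eq0 -lt0n.
  apply: (le_trans hmono); exact: ler_peMr.
Qed.

End Final.
Theorem mainTheorem2 (R : realType) (dX : nat -> measure_display)
  (X : forall n, measurableType (dX n)) (mu : forall n, probability (X n) R)
  (f : forall n, X n -> X n.+1) (E : set (forall n, set (set (X n)))) (k : nat) :
  is_metric_NDS dX X mu f -> admissible dX X f E -> (1 <= k)%N ->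
  admissible (powX dX k) (powXs dX X k) (powf dX X f k) (powE dX X k E) /\
  hclass (powX dX k) (powXs dX X k) (mu 0%N) (powf dX X f k) (powE dX X k E)
    = ((k%:R)%:E * hclass dX X (mu 0%N) f E)%E.
Proof.
move=> hN hE k0.
have mf : forall n, measurable_fun setT (f n) by move=> n; case: (hN n).
have ne : forall n, [set: X n] !=set0.
  move=> n; apply/set0P/negP => /eqP h.
  have := probability_setT (mu n); rewrite h measure0 => /eqP.
  by rewrite eq_sym eqe oner_eq0.
split; first exact: powE_adm.
have [_ partE _ _ joinE] := hE.
apply/eqP; rewrite eq_le; apply/andP; split.
  apply: ge_ereal_sup => _ [Q [P HP ->] <-].
  apply: (le_trans (hseq_le dX X (mu 0%N) f k mf ne k0 P (partE P HP))).
  apply: lee_wpmul2l; first by rewrite lee_fin ler0n.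
  by apply: ereal_sup_ubound; exists P.
rewrite /hclass -ereal_sup_pZl ?ltr0n //.
apply: ge_ereal_sup => _ [_ [P HP <-] <-].
apply: (le_trans (hseq_ge dX X (mu 0%N) f k mf ne k0 P (partE P HP))).
apply: ereal_sup_ubound; exists (fun n => pseq_m dX X f P k (n * k)%N) => //.
by exists (pseq_m dX X f P k) => //; apply: joinE.
Qed.
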